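(* Consider Gaussian linear regression models for a response vector $Y=(Y_1,\dots,Y_n)$: model $M_\ell$ states $Y\sim N_n(X_\ell\beta_\ell,\sigma_\ell^2 I_n)$, where $X_\ell$ is an $n\times d_\ell$ full-rank design matrix. Let $M_0$ (with design matrix $X_0$ of dimension $d_0$) be a reference model nested in every model of the model space $\mathcal M$. For observed data $y$ let $RSS_\ell = y^T\big[I_n - X_\ell(X_\ell^TX_\ell)^{-1}X_\ell^T\big]y$ be the residual sum of squares of $M_\ell$, and define the J-PEP Bayes factor of $M_\ell$ versus $M_0$ by $$BF^{J\text{-}PEP}_{\ell 0} = 2\,\frac{\Gamma(n-d_\ell)}{\Gamma\!\left(\frac{n-d_\ell}{2}\right)^2}\int_0^{\pi/2}\frac{(\sin\phi)^{n-d_0-1}(\cos\phi)^{n-d_\ell-1}(n+\sin^2\phi)^{\frac{n-d_\ell}{2}}}{\left(n\frac{RSS_\ell}{RSS_0}+\sin^2\phi\right)^{\frac{n-d_0}{2}}}\,d\phi,$$ and for two models $M_\ell,M_k$ set $BF^{J\text{-}PEP}_{\ell k}=BF^{J\text{-}PEP}_{\ell 0}/BF^{J\text{-}PEP}_{k 0}$. Then for any two models $M_\ell, M_k\in\mathcal M\setminus\{M_0\}$ and for large $n$, $$-2\log BF^{J\text{-}PEP}_{\ell k}\approx n\log\frac{RSS_\ell}{RSS_k}+(d_\ell-d_k)\log n = BIC_\ell - BIC_k,$$ where $BIC_m = n\log RSS_m + d_m\log n$ (up to an additive constant common to all models).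
   Context: The J-PEP Bayes factor is the Bayes factor obtained from the power-expected-posterior prior with independence Jeffreys baseline prior $\pi^N_\ell(\beta_\ell,\sigma_\ell^2)\propto 1/\sigma_\ell^2$, power parameter $\delta$ equal to the imaginary sample size $n^*$, and $n^*=n$; under these choices it reduces to the displayed integral formula, which may be taken as its definition. $\Gamma$ is the Gamma function. *)

(* Defs.v *)
From Stdlib Require Import Reals.
From Coquelicot Require Import Coquelicot.
Open Scope R_scope.

Definition Gamma (x : R) : R :=
  RInt_gen (fun t => Rpower t (x - 1) * exp (- t))
           (at_right 0) (Rbar_locally p_infty).

Definition BF_JPEP_0 (n d0 dl : nat) (rss0 rssl : R) : R :=
  2 * Gamma (INR n - INR dl) / (Gamma ((INR n - INR dl) / 2)) ^ 2 *
  RInt (fun phi =>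
          (sin phi) ^ (n - d0 - 1) * (cos phi) ^ (n - dl - 1) *
          Rpower (INR n + (sin phi) ^ 2) ((INR n - INR dl) / 2) /
          Rpower (INR n * (rssl / rss0) + (sin phi) ^ 2) ((INR n - INR d0) / 2))
       0 (PI / 2).

Definition BF_JPEP (n d0 dl dk : nat) (rss0 rssl rssk : R) : R :=
  BF_JPEP_0 n d0 dl rss0 rssl / BF_JPEP_0 n d0 dk rss0 rssk.

Definition BIC (n dm : nat) (rssm : R) : R := INR n * ln rssm + INR dm * ln (INR n).

(* Main.v *)
Require Import Defs.
From Stdlib Require Import Reals.
From Coquelicot Require Import Coquelicot.
From Stdlib Require Import Lra Lia Classical.
Open Scope R_scope.

Lemma ball_R (x e y : R) : ball x e y <-> Rabs (y - x) < e.
Proof. reflexivity. Qed.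

Lemma at_right0_pos : at_right 0 (fun a => 0 < a).
Proof. exists (mkposreal 1 Rlt_0_1). intros; auto. Qed.

Lemma pinf_pos : Rbar_locally p_infty (fun b => 0 < b).
Proof. exists 0. intros; auto. Qed.

Lemma exR_pos (f : R -> R) : (forall t, 0 < t -> continuous f t) ->
  forall a b, 0 < a -> 0 < b -> ex_RInt f a b.
Proof.
  intros Hc a b Ha Hb. apply (ex_RInt_continuous (V:=R_CompleteNormedModule)). intros z [Hz _].
  apply Hc. apply Rlt_le_trans with (2 := Hz). apply Rmin_glb_lt; auto.
Qed.

Lemma mono_gen (f : R -> R) (B : R) :
  (forall t, 0 < t -> continuous f t) -> (forall t, 0 < t -> 0 <= f t) ->
  (forall a b, 0 < a -> a <= b -> RInt f a b <= B) ->
  exists l, is_RInt_gen f (at_right 0) (Rbar_locally p_infty) l /\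
            RInt f (1/2) 1 <= l.
Proof.
  intros Hc Hp HB.
  set (E := fun y => exists a b, 0 < a /\ a <= b /\ y = RInt f a b).
  assert (HEb : bound E).
  { exists B. intros y (a & b & Ha & Hab & ->). apply HB; auto. }
  assert (HEn : exists y, E y).
  { exists (RInt f 1 1). exists 1, 1. repeat split; lra. }
  destruct (completeness E HEb HEn) as [l [Hub Hlub]].
  assert (Hge : forall a b, 0 < a -> a <= b -> 0 <= RInt f a b).
  { intros a b Ha Hab. apply RInt_ge_0; auto. apply exR_pos; auto; lra.
    intros x Hx. apply Hp. lra. }
  exists l. split.
  - apply (filterlimi_lim_ext_loc (fun ab => RInt f (fst ab) (snd ab))).
    + exists (fun a => 0 < a) (fun b => 0 < b).
      * apply at_right0_pos.
      * apply pinf_pos.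
      * intros a b Ha Hb. simpl. exact (RInt_correct f a b (exR_pos f Hc a b Ha Hb)).
    + apply filterlim_locally. intros eps.
      destruct (classic (exists y, E y /\ l - eps < y)) as [[y [(a0 & b0 & Ha0 & Hab0 & ->) Hy]] | Hn].
      * exists (fun a => 0 < a < a0) (fun b => b0 < b).
        -- exists (mkposreal a0 Ha0). intros y Hy1 Hy2.
           change (Rabs (y - 0) < a0) in Hy1. unfold Rabs in Hy1. destruct (Rcase_abs (y - 0)); lra.
        -- exists b0. auto.
        -- intros a b [Ha Haa] Hb. simpl. apply ball_R.
           assert (Hin : RInt f a b <= l).
           { apply Hub. exists a, b. repeat split; lra. }
           assert (Hch : RInt f a b = RInt f a a0 + RInt f a0 b0 + RInt f b0 b).
           { assert (H1 := RInt_Chasles f a a0 b (exR_pos f Hc a a0 ltac:(lra) ltac:(lra)) (exR_pos f Hc a0 b ltac:(lra) ltac:(lra))).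
             assert (H2 := RInt_Chasles f a0 b0 b (exR_pos f Hc a0 b0 ltac:(lra) ltac:(lra)) (exR_pos f Hc b0 b ltac:(lra) ltac:(lra))).
             unfold plus in H1, H2; simpl in H1, H2. lra. }
           assert (0 <= RInt f a a0) by (apply Hge; lra).
           assert (0 <= RInt f b0 b) by (apply Hge; lra).
           unfold Rabs; destruct (Rcase_abs (RInt f a b - l)); lra.
      * exfalso. assert (Hu : is_upper_bound E (l - eps)).
        { intros y Hy. destruct (Rle_dec y (l - eps)); auto. exfalso. apply Hn.
          exists y. split; auto. lra. }
        specialize (Hlub _ Hu). destruct eps; simpl in *; lra.
  - apply Hub. exists (1/2), 1. repeat split; lra.
Qed.

Lemma exp_le_exp x y : x <= y -> exp x <= exp y.
Proof. intros H; destruct (Rle_lt_or_eq_dec x y H) as [h|h].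
  apply Rlt_le, exp_increasing; auto. subst; lra. Qed.

Lemma ln_le x y : 0 < x -> x <= y -> ln x <= ln y.
Proof. intros H0 H; destruct (Rle_lt_or_eq_dec x y H) as [h|h].
  apply Rlt_le, ln_increasing; auto. subst; lra. Qed.

Definition gf (x : R) := fun t => Rpower t (x - 1) * exp (- t).

Lemma Rpower_pos (a y : R) : 0 < Rpower a y.
Proof. unfold Rpower. apply exp_pos. Qed.

Lemma ex_derive_Rpower (y t : R) : 0 < t -> ex_derive (fun u => Rpower u y) t.
Proof. intros Ht. exists (y * Rpower t (y - 1)). apply is_derive_Reals.
  apply derivable_pt_lim_power; auto. Qed.

Lemma exd_cont (f : R -> R) t : ex_derive f t -> continuous f t.
Proof. exact (ex_derive_continuous f t). Qed.

Lemma gf_cont x t : 0 < t -> continuous (gf x) t.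
Proof. intros Ht. apply exd_cont. unfold gf. auto_derive.
  apply ex_derive_Rpower; auto. Qed.
Lemma gf_nonneg x t : 0 <= gf x t.
Proof. unfold gf. apply Rlt_le, Rmult_lt_0_compat. apply Rpower_pos. apply exp_pos. Qed.

Lemma gf_ge x t : x <= 1 -> 0 < t <= 1 -> exp (-1) <= gf x t.
Proof.
  intros Hx Ht. unfold gf. rewrite <- (Rmult_1_l (exp (-1))).
  apply Rmult_le_compat; try lra.
  - apply Rlt_le, exp_pos.
  - unfold Rpower. apply Rle_trans with (exp 0); [rewrite exp_0; lra|]. apply exp_le_exp.
    assert (ln t <= 0). { rewrite <- ln_1. apply ln_le; lra. }
    replace ((x - 1) * ln t) with ((1 - x) * (- ln t)) by ring; apply Rmult_le_pos; lra.
  - apply exp_le_exp. lra.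
Qed.

Lemma RInt_gf_pos x : x <= 1 -> exp (-1) / 2 <= RInt (gf x) (1/2) 1.
Proof.
  intros Hx.
  assert (Hc: RInt (fun _ => exp (-1)) (1/2) 1 = exp (-1) / 2).
  { rewrite RInt_const. unfold scal; simpl. unfold mult; simpl. field. }
  rewrite <- Hc. apply RInt_le. lra.
  apply ex_RInt_const.
  apply exR_pos. intros; apply gf_cont; auto. lra. lra.
  intros t Ht. apply gf_ge; lra.
Qed.

Definition good (x : R) := exists l, is_RInt_gen (gf x) (at_right 0) (Rbar_locally p_infty) l /\ 0 < l.

Lemma good_Gamma x : good x -> is_RInt_gen (gf x) (at_right 0) (Rbar_locally p_infty) (Gamma x) /\ 0 < Gamma x.
Proof.
  intros [l [Hl Hp]].
  assert (E : Gamma x = l). { unfold Gamma. apply is_RInt_gen_unique. exact Hl. }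
  rewrite E; auto.
Qed.

Lemma good_1 : good 1.
Proof.
  destruct (mono_gen (gf 1) 1) as [l [Hl Hge]].
  - intros; apply gf_cont; auto.
  - intros; apply gf_nonneg.
  - intros a b Ha Hab.
    assert (His : is_RInt (gf 1) a b (minus (- exp (- b)) (- exp (- a)))).
    { apply (is_RInt_derive (fun t => - exp (- t))).
      - intros t Ht. unfold gf. auto_derive. auto.
        unfold Rpower. rewrite Rminus_diag, Rmult_0_l, exp_0. ring.
      - intros t Ht. apply gf_cont. apply Rlt_le_trans with (2 := proj1 Ht).
        apply Rmin_glb_lt; lra. }
    rewrite (is_RInt_unique _ _ _ _ His). unfold minus, plus, opp; simpl.
    assert (0 < exp (- b)) by apply exp_pos.
    assert (exp (- a) <= 1). { rewrite <- exp_0. apply exp_le_exp. lra. }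
    lra.
  - exists l. split; auto. assert (H := RInt_gf_pos 1 (Rle_refl 1)).
    assert (0 < exp (-1)) by apply exp_pos. lra.
Qed.

Lemma good_half : good (1/2).
Proof.
  set (hh := fun t : R => / (sqrt t * (1 + t))).
  assert (Hle : forall t, 0 < t -> gf (1/2) t <= hh t).
  { intros t Ht. unfold gf, hh.
    replace (1/2 - 1) with (- (/ 2)) by field. rewrite Rpower_Ropp, Rpower_sqrt by auto.
    assert (Hs : 0 < sqrt t) by (apply sqrt_lt_R0; auto).
    rewrite Rinv_mult. apply Rmult_le_compat_l. apply Rlt_le, Rinv_0_lt_compat; auto.
    rewrite exp_Ropp. apply Rinv_le_contravar. lra.
    apply Rlt_le, exp_ineq1. lra. }
  assert (Hhc : forall t, 0 < t -> continuous hh t).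
  { intros t Ht. apply exd_cont. unfold hh. auto_derive.
    assert (0 < sqrt t) by (apply sqrt_lt_R0; auto). split; auto.
    split; auto. apply Rgt_not_eq. apply Rmult_lt_0_compat; lra. }
  destruct (mono_gen (gf (1/2)) (2 * PI)) as [l [Hl Hge]].
  - intros; apply gf_cont; auto.
  - intros; apply gf_nonneg.
  - intros a b Ha Hab.
    assert (His : is_RInt hh a b (minus (2 * atan (sqrt b)) (2 * atan (sqrt a)))).
    { apply (is_RInt_derive (fun t => 2 * atan (sqrt t))).
      - intros t Ht. assert (0 < t). { apply Rlt_le_trans with (2 := proj1 Ht).
          apply Rmin_glb_lt; lra. }
        assert (0 < sqrt t) by (apply sqrt_lt_R0; auto).
        unfold hh. auto_derive. auto.
        replace (sqrt t * (sqrt t * 1)) with t by (rewrite Rmult_1_r, sqrt_sqrt; lra). field. split; lra.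
      - intros t Ht. apply Hhc. apply Rlt_le_trans with (2 := proj1 Ht).
        apply Rmin_glb_lt; lra. }
    apply Rle_trans with (RInt hh a b).
    + apply RInt_le; auto.
      * apply exR_pos; auto. intros; apply gf_cont; auto. lra.
      * apply exR_pos; auto. lra.
      * intros t Ht. apply Hle. lra.
    + rewrite (is_RInt_unique _ _ _ _ His). unfold minus, plus, opp; simpl.
      destruct (atan_bound (sqrt b)). destruct (atan_bound (sqrt a)). lra.
  - exists l. split; auto. assert (H := RInt_gf_pos (1/2) ltac:(lra)).
    assert (0 < exp (-1)) by apply exp_pos. lra.
Qed.

Lemma lim_h0 x : 0 < x ->
  filterlim (fun t => Rpower t x * exp (- t)) (at_right 0) (locally 0).
Proof.
  intros Hx. apply filterlim_locally. intros eps.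
  set (d := exp (ln eps / x)).
  assert (Hd : 0 < d) by apply exp_pos.
  exists (mkposreal d Hd). intros t Ht Htp.
  change (Rabs (t - 0) < d) in Ht. rewrite Rminus_0_r, Rabs_pos_eq in Ht by lra.
  change (Rabs (Rpower t x * exp (- t) - 0) < eps).
  rewrite Rminus_0_r, Rabs_pos_eq.
  2: { apply Rlt_le, Rmult_lt_0_compat. apply Rpower_pos. apply exp_pos. }
  assert (H1 : exp (- t) <= 1). { rewrite <- exp_0. apply exp_le_exp. lra. }
  assert (H2 : Rpower t x < eps).
  { unfold Rpower. rewrite <- (exp_ln eps) by (destruct eps; auto).
    apply exp_increasing. apply ln_increasing in Ht; auto.
    unfold d in Ht. rewrite ln_exp in Ht.
    apply Rmult_lt_compat_l with (r := x) in Ht; auto.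
    replace (x * (ln eps / x)) with (ln eps) in Ht by (field; lra). lra. }
  assert (0 < Rpower t x) by apply Rpower_pos.
  assert (0 < exp (- t)) by apply exp_pos.
  nra.
Qed.

Lemma lim_hinf x :
  filterlim (fun t => Rpower t x * exp (- t)) (Rbar_locally p_infty) (locally 0).
Proof.
  assert (L1 : is_lim (fun t => t * (x * (ln t / t) - 1)) p_infty m_infty).
  { replace m_infty with (Rbar_mult p_infty (x * 0 - 1)).
    2: { simpl. replace (x * 0 - 1) with (-1) by ring.
         case Rle_dec; intros h; [exfalso; lra | reflexivity]. }
    apply is_lim_mult.
    - apply is_lim_id.
    - apply (is_lim_minus _ _ _ (x * 0) 1). exact (is_lim_scal_l _ x _ _ is_lim_div_ln_p).
      apply is_lim_const. simpl. reflexivity.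
    - simpl. replace (x * 0 - 1) with (-1) by ring.
      unfold ex_Rbar_mult. lra. }
  assert (L2 : is_lim (fun t => exp (t * (x * (ln t / t) - 1))) p_infty 0).
  { apply (is_lim_comp exp _ p_infty 0 m_infty). apply is_lim_exp_m. exact L1.
    exists 0. intros; discriminate. }
  apply (is_lim_ext_loc _ (fun t => Rpower t x * exp (- t))) in L2.
  exact L2.
  exists 0. intros t Ht. unfold Rpower. rewrite <- exp_plus. f_equal. field. lra.
Qed.

Lemma pos_between a b t : 0 < a -> 0 < b -> Rmin a b <= t -> 0 < t.
Proof. intros Ha Hb H. apply Rlt_le_trans with (2 := H). apply Rmin_glb_lt; auto. Qed.

Lemma good_rec x : 0 < x -> good x -> good (x + 1) /\ Gamma (x + 1) = x * Gamma x.
Proof.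
  intros Hx Hg. destruct (good_Gamma x Hg) as [Hl Hp].
  set (h := fun t => Rpower t x * exp (- t)).
  set (dh := fun t => x * Rpower t (x - 1) * exp (- t) - Rpower t x * exp (- t)).
  assert (Hd : forall t, 0 < t -> is_derive h t (dh t)).
  { intros t Ht.
    assert (Hp1 : is_derive (fun u => Rpower u x) t (x * Rpower t (x - 1))).
    { apply is_derive_Reals. apply derivable_pt_lim_power; auto. }
    assert (Hp2 : is_derive (fun u => exp (- u)) t (- exp (- t))).
    { auto_derive; auto. ring. }
    assert (H1 := is_derive_mult (K := R_AbsRing) _ _ t _ _ Hp1 Hp2 Rmult_comm).
    replace (dh t) with (plus (mult (x * Rpower t (x - 1)) (exp (- t))) (mult (Rpower t x) (- exp (- t)))).
    exact H1. unfold dh, plus, mult; simpl. ring. }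
  assert (HD : forall t, 0 < t -> Derive h t = dh t).
  { intros t Ht. apply is_derive_unique. apply Hd; auto. }
  assert (Hdc : forall t, 0 < t -> continuous dh t).
  { intros t Ht. apply exd_cont. unfold dh. auto_derive.
    repeat split; auto; apply ex_derive_Rpower; auto. }
  assert (HDc : forall t, 0 < t -> continuous (Derive h) t).
  { intros t Ht. apply (continuous_ext_loc (Derive h) dh t).
    - exists (mkposreal t Ht). intros y Hy. change (Rabs (y - t) < t) in Hy.
      symmetry. apply HD. unfold Rabs in Hy. destruct (Rcase_abs (y - t)); lra.
    - apply Hdc; auto. }
  assert (HI : is_RInt_gen (Derive h) (at_right 0) (Rbar_locally p_infty) (0 - 0)).
  { apply is_RInt_gen_Derive.
    - apply (Filter_prod _ _ _ (fun a => 0 < a) (fun b => 0 < b) at_right0_pos pinf_pos).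
      intros a b Ha Hb t Ht. simpl in Ht. exists (dh t). apply Hd.
      apply (pos_between a b); tauto.
    - apply (Filter_prod _ _ _ (fun a => 0 < a) (fun b => 0 < b) at_right0_pos pinf_pos).
      intros a b Ha Hb t Ht. simpl in Ht. apply HDc. apply (pos_between a b); tauto.
    - apply lim_h0; auto.
    - apply lim_hinf. }
  assert (HS := is_RInt_gen_scal (gf x) x (Gamma x) Hl).
  assert (HM := is_RInt_gen_minus _ _ _ _ HS HI).
  assert (HE : is_RInt_gen (gf (x + 1)) (at_right 0) (Rbar_locally p_infty) (x * Gamma x)).
  { replace (x * Gamma x) with (minus (scal x (Gamma x)) (0 - 0)).
    2: { unfold minus, plus, opp, scal; simpl. unfold mult; simpl. ring. }
    eapply is_RInt_gen_ext; [| exact HM].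
    apply (Filter_prod _ _ _ (fun a => 0 < a) (fun b => 0 < b) at_right0_pos pinf_pos).
    intros a b Ha Hb t Ht. simpl in Ht.
    assert (0 < t). { apply (pos_between a b); auto. lra. }
    rewrite HD by auto. unfold minus, plus, opp, scal, gf, dh; simpl. unfold mult; simpl.
    replace (x + 1 - 1) with x by ring. ring. }
  split.
  - exists (x * Gamma x). split; auto. apply Rmult_lt_0_compat; auto.
  - unfold Gamma at 1. apply is_RInt_gen_unique. exact HE.
Qed.

Lemma good_nat k : good (INR (S k)).
Proof.
  induction k.
  - replace (INR 1) with 1 by reflexivity. apply good_1.
  - rewrite S_INR. assert (0 < INR (S k)) by (apply lt_0_INR; lia).
    exact (proj1 (good_rec _ H IHk)).
Qed.

Lemma good_half_nat k : good (INR (S k) / 2).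
Proof.
  assert (H : forall k, good (INR (S k) / 2) /\ good (INR (S (S k)) / 2)).
  { induction k0.
    - split. replace (INR 1 / 2) with (1/2) by (replace (INR 1) with 1 by reflexivity; field). apply good_half.
      replace (INR 2 / 2) with 1 by (replace (INR 2) with 2 by reflexivity; field). apply good_1.
    - destruct IHk0 as [H1 H2]. split. exact H2.
      replace (INR (S (S (S k0))) / 2) with (INR (S k0) / 2 + 1) by (rewrite !S_INR; field).
      assert (0 < INR (S k0)) by (apply lt_0_INR; lia).
      exact (proj1 (good_rec (INR (S k0) / 2) ltac:(lra) H1)). }
  exact (proj1 (H k)).
Qed.

Definition sc (a b : nat) := fun t => sin t ^ a * cos t ^ b.
Definition Ics (a b : nat) := RInt (sc a b) 0 (PI / 2).

Lemma exd_cont' (f : R -> R) t : ex_derive f t -> continuous f t.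
Proof. exact (ex_derive_continuous f t). Qed.

Lemma sc_cont a b t : continuous (sc a b) t.
Proof. apply exd_cont'. unfold sc. auto_derive. auto. Qed.

Lemma ex_sc a b : ex_RInt (sc a b) 0 (PI / 2).
Proof. apply (ex_RInt_continuous (V:=R_CompleteNormedModule)). intros; apply sc_cont. Qed.

Lemma lin_int (f g : R -> R) (al be u v : R) :
  is_RInt f 0 (PI/2) u -> is_RInt g 0 (PI/2) v ->
  is_RInt (fun t => al * f t - be * g t) 0 (PI/2) (al * u - be * v).
Proof.
  intros Hf Hg.
  assert (H := is_RInt_minus _ _ _ _ _ _ (is_RInt_scal _ _ _ al _ Hf) (is_RInt_scal _ _ _ be _ Hg)).
  exact H.
Qed.

Lemma R1 a b : (INR a + INR b + 2) * Ics (S (S a)) b = (INR a + 1) * Ics a b.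
Proof.
  set (F := fun t => sin t ^ (S a) * cos t ^ (S b)).
  set (df := fun t => (INR a + 1) * sc a b t - (INR a + INR b + 2) * sc (S (S a)) b t).
  assert (H1 : is_RInt df 0 (PI/2) (minus (F (PI/2)) (F 0))).
  { apply (is_RInt_derive F df).
    - intros t _. unfold F, df, sc. auto_derive. auto.
      change (match a with | 0%nat => 1 | S _ => INR a + 1 end) with (INR (S a)).
      change (match b with | 0%nat => 1 | S _ => INR b + 1 end) with (INR (S b)).
      rewrite !S_INR.
      assert (Hsc : sin t ^ 2 + cos t ^ 2 = 1).
      { rewrite <- (sin2_cos2 t). unfold Rsqr. ring. }
      apply Rminus_diag_uniq.
      match goal with |- ?x = 0 => replace x with ((INR a + 1) * sin t ^ a * cos t ^ b * (sin t ^ 2 + cos t ^ 2 - 1)) by (simpl; ring) end.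
      rewrite Hsc. ring.
    - intros t _. apply exd_cont'. unfold df, sc. auto_derive. auto. }
  assert (H2 : minus (F (PI/2)) (F 0) = 0).
  { unfold F, minus, plus, opp; simpl. rewrite cos_PI2, sin_0. ring. }
  rewrite H2 in H1.
  assert (H3 := lin_int _ _ (INR a + 1) (INR a + INR b + 2) _ _
          (RInt_correct _ _ _ (ex_sc a b)) (RInt_correct _ _ _ (ex_sc (S (S a)) b))).
  assert (E1 := is_RInt_unique (V:=R_CompleteNormedModule) _ _ _ _ H1).
  assert (E3 := is_RInt_unique (V:=R_CompleteNormedModule) _ _ _ _ H3).
  unfold df in E1. unfold Ics. rewrite E1 in E3. lra.
Qed.

Lemma R2 a b : (INR a + INR b + 2) * Ics a (S (S b)) = (INR b + 1) * Ics a b.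
Proof.
  set (F := fun t => sin t ^ (S a) * cos t ^ (S b)).
  set (df := fun t => (INR a + INR b + 2) * sc a (S (S b)) t - (INR b + 1) * sc a b t).
  assert (H1 : is_RInt df 0 (PI/2) (minus (F (PI/2)) (F 0))).
  { apply (is_RInt_derive F df).
    - intros t _. unfold F, df, sc. auto_derive. auto.
      change (match a with | 0%nat => 1 | S _ => INR a + 1 end) with (INR (S a)).
      change (match b with | 0%nat => 1 | S _ => INR b + 1 end) with (INR (S b)).
      rewrite !S_INR.
      assert (Hsc : sin t ^ 2 + cos t ^ 2 = 1).
      { rewrite <- (sin2_cos2 t). unfold Rsqr. ring. }
      apply Rminus_diag_uniq.
      match goal with |- ?x = 0 => replace x with (- (INR b + 1) * sin t ^ a * cos t ^ b * (sin t ^ 2 + cos t ^ 2 - 1)) by (simpl; ring) end.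
      rewrite Hsc. ring.
    - intros t _. apply exd_cont'. unfold df, sc. auto_derive. auto. }
  assert (H2 : minus (F (PI/2)) (F 0) = 0).
  { unfold F, minus, plus, opp; simpl. rewrite cos_PI2, sin_0. ring. }
  rewrite H2 in H1.
  assert (H3 := lin_int _ _ (INR a + INR b + 2) (INR b + 1) _ _
          (RInt_correct _ _ _ (ex_sc a (S (S b)))) (RInt_correct _ _ _ (ex_sc a b))).
  assert (E1 := is_RInt_unique (V:=R_CompleteNormedModule) _ _ _ _ H1).
  assert (E3 := is_RInt_unique (V:=R_CompleteNormedModule) _ _ _ _ H3).
  unfold df in E1. unfold Ics. rewrite E1 in E3. lra.
Qed.

Lemma I_nonneg a b : 0 <= Ics a b.
Proof.
  unfold Ics. apply RInt_ge_0. assert (H := PI_RGT_0). lra. apply ex_sc.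
  intros t Ht. assert (H := PI_RGT_0). unfold sc.
  assert (0 < sin t) by (apply sin_gt_0; lra).
  assert (0 < cos t) by (apply cos_gt_0; lra).
  apply Rmult_le_pos; apply pow_le; lra.
Qed.

Lemma I_mono a b : Ics (S a) b <= Ics a b.
Proof.
  unfold Ics. apply RInt_le. assert (H := PI_RGT_0). lra. apply ex_sc. apply ex_sc.
  intros t Ht. assert (H := PI_RGT_0). unfold sc.
  assert (0 < sin t) by (apply sin_gt_0; lra).
  assert (0 < cos t) by (apply cos_gt_0; lra).
  assert (sin t <= 1) by apply SIN_bound.
  simpl. apply Rmult_le_compat_r. apply pow_le; lra.
  assert (0 <= sin t ^ a) by (apply pow_le; lra). nra.
Qed.

Lemma I_half a b : (b <= a)%nat -> / 2 * Ics a b <= Ics (S a) b.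
Proof.
  intros Hab. apply Rle_trans with (Ics (S (S a)) b); [| apply I_mono].
  assert (H := R1 a b). assert (H0 := I_nonneg a b).
  assert (Hb : INR b <= INR a) by (apply le_INR; auto).
  assert (0 <= INR b) by apply pos_INR.
  assert (Hpos : 0 < INR a + INR b + 2) by lra.
  apply Rmult_le_reg_l with (INR a + INR b + 2); auto.
  rewrite H. nra.
Qed.

Lemma I_low b j : (/ 2) ^ j * Ics b b <= Ics (b + j) b.
Proof.
  induction j.
  - rewrite Nat.add_0_r. simpl. lra.
  - rewrite Nat.add_succ_r. simpl.
    assert (H := I_half (b + j) b ltac:(lia)).
    assert (0 <= / 2) by lra. nra.
Qed.

Lemma I_up b j : Ics (b + j) b <= Ics b b.
Proof.
  induction j.
  - rewrite Nat.add_0_r. lra.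
  - rewrite Nat.add_succ_r. assert (H := I_mono (b + j) b). lra.
Qed.

Lemma I_rec2 k : Ics (S (S k)) (S (S k)) = (INR k + 1) / (4 * (INR k + 2)) * Ics k k.
Proof.
  assert (H1 := R1 k (S (S k))). assert (H2 := R2 k k).
  rewrite !S_INR in H1. assert (0 <= INR k) by apply pos_INR.
  apply Rmult_eq_reg_l with (4 * (INR k + 2)). 2: lra.
  field_simplify. 2: lra.
  nra.
Qed.


Lemma ln_1p y : 0 < y -> ln (1 + y) <= y.
Proof. intros Hy. rewrite <- (ln_exp y) at 2. apply ln_le. lra.
  apply Rlt_le, exp_ineq1. lra. Qed.

Lemma Rpower_bound A B e : 0 < A -> 0 <= B <= 1 -> 0 <= e ->
  Rpower A e <= Rpower (A + B) e <= Rpower A e * exp (e / A).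
Proof.
  intros HA HB He. split.
  - apply Rle_Rpower_l; auto; lra.
  - apply Rle_trans with (Rpower (A * (1 + / A)) e).
    + apply Rle_Rpower_l; auto. split; [lra|]. field_simplify; lra.
    + rewrite <- Rpower_mult_distr by (try lra; assert (0 < / A) by (apply Rinv_0_lt_compat; auto); lra).
      apply Rmult_le_compat_l. apply Rlt_le, Rpower_pos.
      unfold Rpower. apply exp_le_exp. unfold Rdiv. apply Rmult_le_compat_l; auto.
      apply ln_1p. apply Rinv_0_lt_compat; auto.
Qed.

Definition fG (k : nat) := Gamma (INR (S k)) / Gamma (INR (S k) / 2) ^ 2 * Ics k k.

Lemma Gam_pos k : 0 < Gamma (INR (S k)).
Proof. exact (proj2 (good_Gamma _ (good_nat k))). Qed.
Lemma Gam2_pos k : 0 < Gamma (INR (S k) / 2).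
Proof. exact (proj2 (good_Gamma _ (good_half_nat k))). Qed.

Lemma fG_per k : fG (S (S k)) = fG k.
Proof.
  unfold fG. rewrite I_rec2.
  assert (E1 : Gamma (INR (S (S (S k)))) = INR (S (S k)) * INR (S k) * Gamma (INR (S k))).
  { assert (A1 : Gamma (INR (S (S k))) = INR (S k) * Gamma (INR (S k))).
    { replace (INR (S (S k))) with (INR (S k) + 1) by (rewrite (S_INR (S k)); ring).
      exact (proj2 (good_rec (INR (S k)) (lt_0_INR (S k) ltac:(lia)) (good_nat k))). }
    replace (INR (S (S (S k)))) with (INR (S (S k)) + 1) by (rewrite (S_INR (S (S k))); ring).
    rewrite (proj2 (good_rec (INR (S (S k))) (lt_0_INR (S (S k)) ltac:(lia)) (good_nat (S k)))).
    rewrite A1. ring. }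
  assert (E2 : Gamma (INR (S (S (S k))) / 2) = INR (S k) / 2 * Gamma (INR (S k) / 2)).
  { replace (INR (S (S (S k))) / 2) with (INR (S k) / 2 + 1) by (rewrite !S_INR; field).
    assert (0 < INR (S k)) by (apply lt_0_INR; lia).
    exact (proj2 (good_rec (INR (S k) / 2) ltac:(lra) (good_half_nat k))). }
  rewrite E1, E2. rewrite !S_INR.
  assert (0 <= INR k) by apply pos_INR.
  assert (H1 := Gam_pos k). assert (H2 := Gam2_pos k). rewrite S_INR in H1, H2.
  field. repeat split; lra.
Qed.

Lemma I00 : Ics 0 0 = PI / 2.
Proof.
  unfold Ics, sc. rewrite (RInt_ext _ (fun _ => 1)).
  rewrite RInt_const. unfold scal; simpl. unfold mult; simpl. ring.
  intros; simpl; ring.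
Qed.

Lemma I11 : Ics 1 1 = / 2.
Proof.
  unfold Ics. apply is_RInt_unique.
  assert (H := is_RInt_derive (fun t => sin t ^ 2 / 2) (sc 1 1) 0 (PI / 2)).
  replace (/ 2) with (minus (sin (PI / 2) ^ 2 / 2) (sin 0 ^ 2 / 2)).
  apply H.
  - intros t _. unfold sc. auto_derive; [exact I | simpl; match goal with |- ?a = ?b => change (@eq R a b) end; field].
  - intros; apply sc_cont.
  - rewrite sin_PI2, sin_0. unfold minus, plus, opp; simpl. field.
Qed.

Lemma fG_pos k : 0 < fG k.
Proof.
  assert (H : forall k, 0 < fG k /\ 0 < fG (S k)).
  { induction k0.
    - split.
      + unfold fG. rewrite I00. assert (H1 := Gam_pos 0). assert (H2 := Gam2_pos 0).
        assert (H3 := PI_RGT_0).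
        apply Rmult_lt_0_compat. apply Rdiv_lt_0_compat; auto. apply pow_lt; auto. lra.
      + unfold fG. rewrite I11. assert (H1 := Gam_pos 1). assert (H2 := Gam2_pos 1).
        apply Rmult_lt_0_compat. apply Rdiv_lt_0_compat; auto. apply pow_lt; auto. lra.
    - destruct IHk0. split; auto. rewrite fG_per. auto. }
  exact (proj1 (H k)).
Qed.

Lemma fG_val k : fG k = fG 0 \/ fG k = fG 1.
Proof.
  assert (H : forall k, (fG k = fG 0 \/ fG k = fG 1) /\ (fG (S k) = fG 0 \/ fG (S k) = fG 1)).
  { induction k0.
    - split; auto.
    - destruct IHk0. split; auto. rewrite fG_per. auto. }
  exact (proj1 (H k)).
Qed.

Lemma div_bounds P Q Pl Pu Ql Qu : 0 < Pl -> 0 < Ql -> Pl <= P <= Pu -> Ql <= Q <= Qu ->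
  Pl / Qu <= P / Q <= Pu / Ql.
Proof.
  intros HPl HQl [H1 H2] [H3 H4]. unfold Rdiv. split.
  - apply Rmult_le_compat; try lra. apply Rlt_le, Rinv_0_lt_compat; lra.
    apply Rinv_le_contravar; lra.
  - apply Rmult_le_compat; try lra. apply Rlt_le, Rinv_0_lt_compat; lra.
    apply Rinv_le_contravar; lra.
Qed.

Lemma main (d0 d : nat) (c : R) : (d0 < d)%nat -> 0 < c ->
  exists K, forall n rho0 rho, (d < n)%nat -> 0 < rho0 -> c * rho0 <= rho <= rho0 ->
  0 < BF_JPEP_0 n d0 d rho0 rho /\
  Rabs (ln (BF_JPEP_0 n d0 d rho0 rho) + (INR d - INR d0) / 2 * ln (INR n)
        + (INR n - INR d0) / 2 * ln (rho / rho0)) <= K.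
Proof.
  intros Hd Hc. set (a := (d - d0)%nat).
  exists (ln 2 + / 2 + / (2 * c) + INR a * ln 2 + Rabs (ln (fG 0)) + Rabs (ln (fG 1))).
  intros n rho0 rho Hn H0 Hr.
  set (k := (n - d - 1)%nat).
  set (q := INR n). set (r := rho / rho0).
  assert (Hr' : c <= r <= 1).
  { unfold r. split.
    - apply Rmult_le_reg_r with rho0; auto. unfold Rdiv. rewrite Rmult_assoc, Rinv_l; lra.
    - apply Rmult_le_reg_r with rho0; auto. unfold Rdiv. rewrite Rmult_assoc, Rinv_l; lra. }
  assert (Hq1 : 1 <= q). { unfold q. replace 1 with (INR 1) by reflexivity. apply le_INR. lia. }
  assert (HINR : INR n - INR d = INR (S k)).
  { unfold k. rewrite <- minus_INR by lia. f_equal. lia. }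
  assert (HINR0 : INR d - INR d0 = INR a).
  { unfold a. rewrite <- minus_INR by lia. reflexivity. }
  assert (Hd0q : INR d0 <= q). { unfold q. apply le_INR. lia. }
  assert (Hdq : INR d <= q). { unfold q. apply le_INR. lia. }
  set (e1 := INR (S k) / 2). set (e0 := (q - INR d0) / 2).
  assert (He1 : 0 <= e1 <= q / 2).
  { unfold e1. rewrite <- HINR. assert (0 <= INR d0) by apply pos_INR.
    assert (INR d0 < INR d) by (apply lt_INR; auto). fold q. lra. }
  assert (He0 : 0 <= e0 <= q / 2).
  { unfold e0. assert (0 <= INR d0) by apply pos_INR. lra. }
  assert (Hqr : 0 < q * r) by (apply Rmult_lt_0_compat; lra).
  set (L := Rpower q e1 / (Rpower (q * r) e0 * exp (/ (2 * c)))).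
  set (U := Rpower q e1 * exp (/ 2) / Rpower (q * r) e0).
  unfold BF_JPEP_0. rewrite HINR. fold q. fold r. fold e1. fold e0. fold k.
  replace (n - d0 - 1)%nat with (k + a)%nat by (unfold k, a; lia).
  match goal with |- context [RInt ?f 0 (PI / 2)] => set (h := f) end.
  assert (Hh : forall t, 0 < t < PI / 2 -> L * sc (k + a) k t <= h t <= U * sc (k + a) k t).
  { intros t Ht. unfold h, sc. assert (HPI := PI_RGT_0).
    assert (Hsin : 0 < sin t) by (apply sin_gt_0; lra).
    assert (Hcos : 0 < cos t) by (apply cos_gt_0; lra).
    assert (Hs1 : sin t <= 1) by apply SIN_bound.
    assert (Hs : 0 <= sin t ^ 2 <= 1) by (simpl; nra).
    assert (HS : 0 <= sin t ^ (k + a) * cos t ^ k).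
    { apply Rmult_le_pos; apply pow_le; lra. }
    destruct (Rpower_bound q (sin t ^ 2) e1 ltac:(lra) Hs ltac:(lra)) as [P1 P2].
    destruct (Rpower_bound (q * r) (sin t ^ 2) e0 Hqr Hs ltac:(lra)) as [Q1 Q2].
    assert (P3 : Rpower q e1 * exp (e1 / q) <= Rpower q e1 * exp (/ 2)).
    { apply Rmult_le_compat_l. apply Rlt_le, Rpower_pos. apply exp_le_exp.
      apply Rmult_le_reg_r with q; [lra|]. unfold Rdiv. rewrite Rmult_assoc, Rinv_l; lra. }
    assert (Q3 : Rpower (q * r) e0 * exp (e0 / (q * r)) <= Rpower (q * r) e0 * exp (/ (2 * c))).
    { apply Rmult_le_compat_l. apply Rlt_le, Rpower_pos. apply exp_le_exp.
      apply Rmult_le_reg_r with (q * r); [lra|]. unfold Rdiv. rewrite Rmult_assoc, Rinv_l by lra.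
      assert (Hrc : 1 <= r / c).
      { apply Rmult_le_reg_r with c; auto. unfold Rdiv. rewrite Rmult_assoc, Rinv_l; lra. }
      replace (/ (2 * c) * (q * r)) with (q / 2 * (r / c)) by (field; lra). nra. }
    assert (Hdb := div_bounds (Rpower (q + sin t ^ 2) e1) (Rpower (q * r + sin t ^ 2) e0)
       (Rpower q e1) (Rpower q e1 * exp (/ 2)) (Rpower (q * r) e0)
       (Rpower (q * r) e0 * exp (/ (2 * c))) (Rpower_pos _ _) (Rpower_pos _ _)
       (conj P1 (Rle_trans _ _ _ P2 P3)) (conj Q1 (Rle_trans _ _ _ Q2 Q3))).
    fold L U in Hdb.
    replace (sin t ^ (k + a) * cos t ^ k * Rpower (q + sin t ^ 2) e1 / Rpower (q * r + sin t ^ 2) e0)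
      with (sin t ^ (k + a) * cos t ^ k * (Rpower (q + sin t ^ 2) e1 / Rpower (q * r + sin t ^ 2) e0))
      by (unfold Rdiv; ring).
    split; rewrite (Rmult_comm _ (sin t ^ (k + a) * cos t ^ k)); apply Rmult_le_compat_l; tauto. }
  assert (HPI := PI_RGT_0).
  assert (Hhc : forall t, continuous h t).
  { intros t. apply exd_cont. unfold h.
    assert (0 <= sin t ^ 2) by (simpl; nra).
    auto_derive. repeat split; try apply ex_derive_Rpower; try lra.
    apply Rgt_not_eq, Rpower_pos. }
  assert (exh : ex_RInt h 0 (PI / 2)).
  { apply (ex_RInt_continuous (V:=R_CompleteNormedModule)). intros; apply Hhc. }
  assert (ES : forall M, RInt (fun x => M * sc (k + a) k x) 0 (PI / 2) = M * Ics (k + a) k).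
  { intros M. exact (RInt_scal (sc (k + a) k) 0 (PI / 2) M (ex_sc _ _)). }
  assert (exS : forall M, ex_RInt (fun x => M * sc (k + a) k x) 0 (PI / 2)).
  { intros M. apply (ex_RInt_continuous (V:=R_CompleteNormedModule)). intros.
    apply exd_cont. unfold sc. auto_derive. auto. }
  assert (HJ : L * Ics (k + a) k <= RInt h 0 (PI / 2) <= U * Ics (k + a) k).
  { split.
    - rewrite <- ES. apply RInt_le; auto. lra. intros t Ht; apply Hh; auto.
    - rewrite <- ES. apply RInt_le; auto. lra. intros t Ht; apply Hh; auto. }
  assert (HG : 0 < Gamma (INR (S k))) by apply Gam_pos.
  assert (HG2 : 0 < Gamma e1) by exact (Gam2_pos k).
  assert (HfG : fG k = Gamma (INR (S k)) / Gamma e1 ^ 2 * Ics k k) by reflexivity.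
  assert (Hf := fG_pos k).
  assert (Hg : 0 < Gamma (INR (S k)) / Gamma e1 ^ 2).
  { apply Rdiv_lt_0_compat; auto. apply pow_lt; auto. }
  assert (HIkk : 0 < Ics k k).
  { rewrite HfG in Hf. destruct (Rle_lt_dec (Ics k k) 0); auto. nra. }
  assert (Hlow := I_low k a). assert (Hup := I_up k a).
  assert (HL : 0 < L).
  { unfold L. apply Rdiv_lt_0_compat. apply Rpower_pos.
    apply Rmult_lt_0_compat. apply Rpower_pos. apply exp_pos. }
  assert (HU : 0 < U).
  { unfold U. apply Rdiv_lt_0_compat. apply Rmult_lt_0_compat. apply Rpower_pos.
    apply exp_pos. apply Rpower_pos. }
  assert (Hpa : 0 < (/ 2) ^ a) by (apply pow_lt; lra).
  set (BF := 2 * Gamma (INR (S k)) / Gamma e1 ^ 2 * RInt h 0 (PI / 2)).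
  assert (HBF : 2 * (L * ((/ 2) ^ a * fG k)) <= BF <= 2 * (U * fG k)).
  { unfold BF. rewrite HfG.
    replace (2 * Gamma (INR (S k)) / Gamma e1 ^ 2) with (2 * (Gamma (INR (S k)) / Gamma e1 ^ 2))
      by (unfold Rdiv; ring).
    set (g := Gamma (INR (S k)) / Gamma e1 ^ 2) in *.
    split.
    - assert (L * ((/ 2) ^ a * Ics k k) <= RInt h 0 (PI / 2)).
      { apply Rle_trans with (L * Ics (k + a) k). apply Rmult_le_compat_l; lra. lra. }
      replace (2 * (L * ((/ 2) ^ a * (g * Ics k k)))) with (2 * g * (L * ((/ 2) ^ a * Ics k k))) by ring.
      apply Rmult_le_compat_l. lra. lra.
    - assert (RInt h 0 (PI / 2) <= U * Ics k k).
      { apply Rle_trans with (U * Ics (k + a) k). lra. apply Rmult_le_compat_l; lra. }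
      replace (2 * (U * (g * Ics k k))) with (2 * g * (U * Ics k k)) by ring.
      apply Rmult_le_compat_l. lra. lra. }
  assert (Hlow0 : 0 < 2 * (L * ((/ 2) ^ a * fG k))).
  { apply Rmult_lt_0_compat. lra. apply Rmult_lt_0_compat; auto. apply Rmult_lt_0_compat; auto. }
  assert (HBFp : 0 < BF) by lra.
  split; [exact HBFp|].
  assert (Hl1 := ln_le _ _ Hlow0 (proj1 HBF)).
  assert (Hl2 := ln_le _ _ HBFp (proj2 HBF)).
  assert (Hlnqr : ln (q * r) = ln q + ln r) by (apply ln_mult; lra).
  assert (EL : ln (2 * (L * ((/ 2) ^ a * fG k))) =
     ln 2 + (e1 * ln q - (e0 * (ln q + ln r) + / (2 * c))) - INR a * ln 2 + ln (fG k)).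
  { rewrite !ln_mult; try lra; try apply Rmult_lt_0_compat; auto.
    unfold L. unfold Rdiv. rewrite ln_mult, ln_Rinv, ln_mult, !ln_Rpower, ln_exp, Hlnqr, ln_pow, ln_Rinv;
      try lra; try apply Rpower_pos; try apply exp_pos; try apply Rinv_0_lt_compat;
      try apply Rmult_lt_0_compat; try apply Rpower_pos; try apply exp_pos; try lra.
    all: try ring. }
  assert (EU : ln (2 * (U * fG k)) = ln 2 + (e1 * ln q + / 2 - e0 * (ln q + ln r)) + ln (fG k)).
  { rewrite !ln_mult; try lra; try apply Rmult_lt_0_compat; auto.
    unfold U. unfold Rdiv. rewrite ln_mult, ln_mult, ln_Rinv, !ln_Rpower, ln_exp, Hlnqr;
      try lra; try apply Rpower_pos; try apply exp_pos; try apply Rinv_0_lt_compat;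
      try apply Rmult_lt_0_compat; try apply Rpower_pos; try apply exp_pos; try lra.
    all: try ring. }
  rewrite EL in Hl1. rewrite EU in Hl2.
  assert (Ee1 : e1 = (q - INR d) / 2) by (unfold e1; rewrite <- HINR; reflexivity).
  assert (Hfb : Rabs (ln (fG k)) <= Rabs (ln (fG 0)) + Rabs (ln (fG 1))).
  { assert (0 <= Rabs (ln (fG 0))) by apply Rabs_pos.
    assert (0 <= Rabs (ln (fG 1))) by apply Rabs_pos.
    destruct (fG_val k) as [E|E]; rewrite E; lra. }
  assert (Hln2 : 0 < ln 2) by (rewrite <- ln_1; apply ln_increasing; lra).
  assert (Ha0 : 0 <= INR a) by apply pos_INR.
  assert (Hc2 : 0 < / (2 * c)) by (apply Rinv_0_lt_compat; lra).
  assert (Ee0 : e0 = (q - INR d0) / 2) by reflexivity.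
  fold q. fold BF. fold r. clearbody e1 e0.
  rewrite Ee1, Ee0 in Hl1, Hl2.
  assert (Hf1 : ln (fG k) <= Rabs (ln (fG k))) by apply Rle_abs.
  assert (Hf2 : - ln (fG k) <= Rabs (ln (fG k))) by (rewrite <- Rabs_Ropp; apply Rle_abs).
  assert (0 <= INR a * ln 2) by (apply Rmult_le_pos; lra). rewrite Ee0. apply Rabs_le. split; lra.
Qed.
Lemma Rabs_two x K : Rabs x <= K -> - K <= x <= K.
Proof. intros H. assert (x <= Rabs x) by apply Rle_abs.
  assert (- x <= Rabs x) by (rewrite <- Rabs_Ropp; apply Rle_abs). lra. Qed.

Theorem theorem1 (d0 dl dk : nat) (c : R) (rss0 rssl rssk : nat -> R) :
  (d0 < dl)%nat -> (d0 < dk)%nat -> 0 < c ->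
  (forall n, 0 < rss0 n) ->
  (forall n, c * rss0 n <= rssl n <= rss0 n) ->
  (forall n, c * rss0 n <= rssk n <= rss0 n) ->
  exists (C : R) (N : nat), forall n : nat, (N <= n)%nat ->
    Rabs (- 2 * ln (BF_JPEP n d0 dl dk (rss0 n) (rssl n) (rssk n))
          - (BIC n dl (rssl n) - BIC n dk (rssk n))) <= C.
Proof.
  intros Hl Hk Hc H0 Hrl Hrk.
  destruct (main d0 dl c Hl Hc) as [Kl HKl].
  destruct (main d0 dk c Hk Hc) as [Kk HKk].
  exists (2 * Kl + 2 * Kk + INR d0 * (- ln c)), (S (Nat.max dl dk)).
  intros n Hn.
  assert (Hn1 : (dl < n)%nat) by lia. assert (Hn2 : (dk < n)%nat) by lia.
  destruct (HKl n (rss0 n) (rssl n) Hn1 (H0 n) (Hrl n)) as [Pl Al].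
  destruct (HKk n (rss0 n) (rssk n) Hn2 (H0 n) (Hrk n)) as [Pk Ak].
  apply Rabs_two in Al. apply Rabs_two in Ak.
  assert (Hp0 := H0 n). destruct (Hrl n) as [Hl1 Hl2]. destruct (Hrk n) as [Hk1 Hk2].
  assert (Hc1 : c <= 1). { apply Rmult_le_reg_r with (rss0 n); auto. lra. }
  assert (Hpl : 0 < rssl n). { assert (0 < c * rss0 n) by (apply Rmult_lt_0_compat; auto). lra. }
  assert (Hpk : 0 < rssk n). { assert (0 < c * rss0 n) by (apply Rmult_lt_0_compat; auto). lra. }
  assert (Edl : ln (rssl n / rss0 n) = ln (rssl n) - ln (rss0 n)).
  { unfold Rdiv. rewrite ln_mult, ln_Rinv; auto. apply Rinv_0_lt_compat; auto. }
  assert (Edk : ln (rssk n / rss0 n) = ln (rssk n) - ln (rss0 n)).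
  { unfold Rdiv. rewrite ln_mult, ln_Rinv; auto. apply Rinv_0_lt_compat; auto. }
  assert (Blc : forall x, c * rss0 n <= x <= rss0 n -> ln c <= ln (x / rss0 n) <= 0).
  { intros x [h1 h2]. split.
    - apply ln_le; auto. apply Rmult_le_reg_r with (rss0 n); auto. unfold Rdiv.
      rewrite Rmult_assoc, Rinv_l; lra.
    - rewrite <- ln_1. apply ln_le.
      + assert (0 < c * rss0 n) by (apply Rmult_lt_0_compat; auto).
        apply Rdiv_lt_0_compat; lra.
      + apply Rmult_le_reg_r with (rss0 n); auto. unfold Rdiv.
        rewrite Rmult_assoc, Rinv_l; lra. }
  destruct (Blc _ (Hrl n)) as [Bl1 Bl2]. destruct (Blc _ (Hrk n)) as [Bk1 Bk2].
  rewrite Edl in Al, Bl1, Bl2. rewrite Edk in Ak, Bk1, Bk2.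
  assert (Hd0 : 0 <= INR d0) by apply pos_INR.
  assert (M1 : INR d0 * (ln (rssl n) - ln (rssk n)) <= INR d0 * (- ln c)).
  { apply Rmult_le_compat_l; lra. }
  assert (M2 : - (INR d0 * (- ln c)) <= INR d0 * (ln (rssl n) - ln (rssk n))).
  { replace (- (INR d0 * (- ln c))) with (INR d0 * ln c) by ring. apply Rmult_le_compat_l; lra. }
  unfold BF_JPEP, BIC. unfold Rdiv at 1. rewrite ln_mult, ln_Rinv; auto.
  2: apply Rinv_0_lt_compat; auto.
  apply Rabs_le. split; lra.
Qed.
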